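(* Let $G$ be an abelian Hausdorff topological group and $A\subseteq G$ with $0\notin A$. Then $A$ is absolutely Cauchy summable in $G$ if and only if the Kalton map $K_A:S_A\to G$ is continuous.
   Context: For $a\in G$, $\langle a\rangle$ is the cyclic subgroup generated by $a$ with the subspace topology. $P_A=\prod_{a\in A}\langle a\rangle$ carries the Tychonoff product topology and $S_A=\bigoplus_{a\in A}\langle a\rangle$ (finitely supported elements of $P_A$) the subspace topology. The Kalton map $K_A:S_A\to G$ is the unique group homomorphism extending each inclusion $\langle a\rangle\to G$, $a\in A$. $A$ is absolutely Cauchy summable if for every neighbourhood $U$ of $0$ there is a finite $F\subseteq A$ such that the subgroup $\langle A\setminus F\rangle$ generated by $A\setminus F$ is contained in $U$. *)

(* Defs.v *)
From HB Require Import structures.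
From mathcomp Require Import all_boot all_order all_algebra.
From mathcomp Require Import all_classical all_reals all_analysis.
Unset Printing Implicit Defensive.
Import Order.TTheory GRing.Theory Num.Theory.
Local Open Scope classical_set_scope.
Local Open Scope ring_scope.

Section Kalton.
Variable G : topologicalZmodType.

Definition is_subgroup (H : set G) : Prop :=
  H 0 /\ (forall x y, H x -> H y -> H (x - y)).

Definition gen_subgroup (B : set G) : set G :=
  [set x | forall H : set G, is_subgroup H -> B `<=` H -> H x].

Definition cyc (a : G) : set G := gen_subgroup [set a].

Definition abs_cauchy_summable (A : set G) : Prop :=
  forall U : set G, nbhs (0 : G) U ->
    exists F : set G, [/\ finite_set F, F `<=` A & gen_subgroup (A `\` F) `<=` U].

Definition idx (A : set G) := {a : G | a \in A}.

(* P_A with the Tychonoff product topology: functions on A with values in G,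
   with the pointwise (product) topology; P_A is the subspace of those f with
   f a \in <a> for all a. *)
Definition PA (A : set G) : set {ptws idx A -> G} :=
  [set f | forall i : idx A, cyc (val i) (f i)].

Definition SA (A : set G) : set {ptws idx A -> G} :=
  [set f | PA A f /\ finite_set [set i | f i != 0]].

Definition Kalton (A : set G) (f : {ptws idx A -> G}) : G :=
  (\sum_(i \in [set: idx A]) f i)%R.

End Kalton.

Arguments is_subgroup {G}.
Arguments gen_subgroup {G}.
Arguments cyc {G}.
Arguments abs_cauchy_summable {G}.
Arguments idx {G}.
Arguments PA {G}.
Arguments SA {G}.
Arguments Kalton {G}.

(* Main.v *)
Require Import Defs.
From HB Require Import structures.
From mathcomp Require Import all_boot all_order all_algebra.
From mathcomp Require Import all_classical all_reals all_analysis.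
From mathcomp Require Import finmap.
Import Order.TTheory GRing.Theory Num.Theory.
Local Open Scope classical_set_scope.
Local Open Scope ring_scope.

Section Aux.
Variable G : topologicalZmodType.

Lemma my_cvgD (T : Type) (F : set_system T) {FF : Filter F} (f g : T -> G) a b :
  f @ F --> a -> g @ F --> b -> (fun x => f x + g x) @ F --> a + b.
Proof.
move=> fa gb.
apply: (@cvg_comp _ _ _ (fun x => (f x, g x)) (fun p : G * G => p.1 + p.2) F (nbhs (a, b))).
  exact: cvg_pair.
exact: (@add_continuous G (a, b)).
Qed.

Lemma my_cvgN (T : Type) (F : set_system T) {FF : Filter F} (f : T -> G) a :
  f @ F --> a -> (fun x => - f x) @ F --> - a.
Proof.
move=> fa; apply: (@cvg_comp _ _ _ f (fun p : G => - p) F (nbhs a)) => //.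
exact: opp_continuous.
Qed.

Lemma my_cvg_sum (T I : Type) (F : set_system T) {FF : Filter F} (s : seq I)
   (f : I -> T -> G) :
  (forall i, f i @ F --> 0) -> (fun x => \sum_(i <- s) f i x) @ F --> 0.
Proof.
move=> hf; elim: s => [|j s IH].
  have -> : (fun x => \sum_(i <- [::]) f i x) = fun=> 0.
    by apply/funext=> x; rewrite big_nil.
  exact: cvg_cst.
have -> : (fun x => \sum_(i <- j :: s) f i x) =
   (fun x => f j x + \sum_(i <- s) f i x).
  by apply/funext=> x; rewrite big_cons.
have H := @my_cvgD _ _ _ _ _ _ _ (hf j) IH. rewrite addr0 in H. exact: H.
Qed.

Lemma proj_cvg (I : eqType) (x : {ptws I -> G}) (i : I) :
  (fun f : {ptws I -> G} => f i) @ nbhs x --> x i.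
Proof. exact: (@proj_continuous I (fun _ => G) i x). Qed.

End Aux.

Section Alg.
Variable G : topologicalZmodType.

Lemma subgroupD (H : set G) x y : is_subgroup H -> H x -> H y -> H (x + y).
Proof.
move=> [H0 HB] Hx Hy.
have Hny : H (- y) by rewrite -sub0r; apply: HB.
by rewrite -(opprK y); apply: HB.
Qed.

Lemma subgroup_sum (H : set G) (I : Type) (s : seq I) (f : I -> G) :
  is_subgroup H -> (forall i, H (f i)) -> H (\sum_(i <- s) f i).
Proof.
move=> sH hf; elim: s => [|j s IH]; first by rewrite big_nil; case: sH.
by rewrite big_cons; apply: subgroupD.
Qed.

Lemma gen_subgroupP (B : set G) : is_subgroup (gen_subgroup B).
Proof.
split; first by move=> H [].
by move=> x y hx hy H sH BH; case: (sH) => _; apply; [apply: hx|apply: hy].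
Qed.

Lemma gen_subgroup_sub (B : set G) : B `<=` gen_subgroup B.
Proof. by move=> x Bx H _; apply. Qed.

Lemma cyc_subgroup (a : G) : is_subgroup (cyc a).
Proof. exact: gen_subgroupP. Qed.

Lemma cyc_gen (B : set G) a : B a -> cyc a `<=` gen_subgroup B.
Proof.
move=> Ba x hx H sH BH; apply: hx => // y ->; exact: BH.
Qed.

Lemma cyc_self (a : G) : cyc a a.
Proof. exact: gen_subgroup_sub. Qed.

Variable A : set G.

Lemma KE (f : {ptws idx A -> G}) (X : {fset idx A}) :
  (forall i, i \notin X -> f i = 0) -> Kalton A f = \sum_(i <- X) f i.
Proof. by move=> hX; rewrite /Kalton (fsbigTE X). Qed.

Lemma SA_supp (f : {ptws idx A -> G}) : SA A f ->
  exists X : {fset idx A}, forall i, i \notin X -> f i = 0.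
Proof.
move=> [_ fin]; exists (fset_set [set i | f i != 0]) => i.
by rewrite in_fset_set // notin_setE /= => /negP/negPn/eqP.
Qed.

Lemma SA0 : SA A 0.
Proof.
split; first by move=> i; case: (cyc_subgroup (val i)).
by have -> : [set i : idx A | (0 : {ptws idx A -> G}) i != 0] = set0
  by apply/seteqP; split => i //=; rewrite eqxx.
Qed.

Lemma SAB f g : SA A f -> SA A g -> SA A (f - g).
Proof.
move=> [Pf ff] [Pg fg]; split.
  by move=> i; case: (cyc_subgroup (val i)) => _; apply.
apply: (@sub_finite_set _ _ ([set i | f i != 0] `|` [set i | g i != 0])).
  move=> i /=; rewrite /= !fctE => hi.
  case: (eqVneq (f i) 0) => hf; last by left.
  right; apply: contraNneq hi => ->; by rewrite hf subr0.
by rewrite finite_setU.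
Qed.

Lemma KB f g : SA A f -> SA A g -> Kalton A (f - g) = Kalton A f - Kalton A g.
Proof.
move=> /SA_supp [X hX] /SA_supp [Y hY].
have hXY (h : {ptws idx A -> G}) : (forall i, i \notin X -> h i = 0) -> forall i, i \notin (X `|` Y)%fset -> h i = 0.
  by move=> hh i; rewrite inE negb_or => /andP[/hh].
have hYX (h : {ptws idx A -> G}) : (forall i, i \notin Y -> h i = 0) -> forall i, i \notin (X `|` Y)%fset -> h i = 0.
  by move=> hh i; rewrite inE negb_or => /andP[_ /hh].
rewrite (@KE f _ (hXY f hX)) (@KE g _ (hYX g hY)) (@KE _ (X `|` Y)%fset).
  by rewrite -sumrB.
by move=> i hi; rewrite !fctE (hXY f hX i hi) (hYX g hY i hi) subr0.
Qed.
End Alg.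

Section Main.
Variable G : topologicalZmodType.
Variable A : set G.

Lemma K0 : Kalton A 0 = 0.
Proof. by rewrite /Kalton fsbig1. Qed.

Lemma cont_to_acs : {within SA A, continuous (Kalton A)} -> abs_cauchy_summable A.
Proof.
move=> hK U U0.
have := (iffLR (subspace_continuousP _ _) hK) 0 (@SA0 G A) U.
rewrite /from_subspace K0 => /(_ U0) hw.
pose B (T : set (idx A)) :=
  [set f : {ptws idx A -> G} | SA A f /\ forall i, T i -> f i = 0].
pose Fl := filter_from [set T : set (idx A) | finite_set T] B.
have FlF : Filter Fl.
  apply: filter_from_filter; first by exists set0; exact: finite_set0.
  move=> T1 T2 f1 f2; exists (T1 `|` T2); first by rewrite /= finite_setU.
  by move=> f [Sf hf]; split; split=> // i Ti; apply: hf; [left|right].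
have Fl0 : Fl --> (0 : {ptws idx A -> G}).
  apply/cvg_sup => i Q [B' [oB B0] BQ].
  case: oB => O oO OB.
  exists [set i]; first exact: finite_set1.
  move=> f [_ hf]; apply: BQ; rewrite -OB /= hf //.
  by rewrite -OB in B0.
have := Fl0 _ hw.
move=> [T finT TB].
exists (val @` T); split.
- exact: finite_image.
- by move=> _ [i _ <-]; exact: (set_mem (valP i)).
- move=> x hx.
  pose H := [set y | exists f, B T f /\ Kalton A f = y].
  have sH : is_subgroup H.
    split.
      exists 0; split; last exact: K0.
      by split; [exact: SA0|].
    move=> _ _ [f [[Sf hf] <-]] [g [[Sg hg] <-]]; exists (f - g); split.
      split; first exact: SAB.
      by move=> i Ti; rewrite !fctE hf ?hg ?subr0.
    exact: KB.
  have AFH : A `\` (val @` T) `<=` H.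
    move=> a [Aa naF].
    have ia : a \in A by exact: mem_set.
    pose i0 : idx A := exist _ a ia.
    pose f : {ptws idx A -> G} := fun j => if j == i0 then a else 0.
    exists f; split; [split|].
      split.
        move=> j; rewrite /f; case: eqP => [->|_]; first exact: cyc_self.
        by case: (@cyc_subgroup _ (val j)).
      apply: (@sub_finite_set _ _ [set i0]); last exact: finite_set1.
      move=> j /=; rewrite /f; case: (j =P i0) => // _; by rewrite eqxx.
    move=> j Tj; rewrite /f; case: eqP => // ej; exfalso; apply: naF.
      by exists j => //; rewrite ej.
    rewrite (@KE _ _ f [fset i0]%fset); first by rewrite big_seq_fset1 /f eqxx.
    by move=> j; rewrite in_fset1 /f => /negbTE ->.
  have [f [Bf <-]] := hx H sH AFH.
  exact: (TB f Bf Bf.1).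
Qed.

Lemma acs_to_cont : abs_cauchy_summable A -> {within SA A, continuous (Kalton A)}.
Proof.
move=> hA; apply/subspace_continuousP => x0 Sx0 U /= UK.
have hc : (fun p : G * G => Kalton A x0 + (p.1 + p.2)) @ nbhs ((0 : G), (0 : G))
    --> Kalton A x0.
  have := @my_cvgD G _ (nbhs ((0 : G), (0 : G))) _ (fun=> Kalton A x0)
    (fun p : G * G => p.1 + p.2) (Kalton A x0) (0 + 0) (cvg_cst _).
  rewrite !addr0 => h; apply: h; try exact: nbhs_filter.
  have := @my_cvgD G _ (nbhs ((0 : G), (0 : G))) _ fst snd 0 0 cvg_fst cvg_snd.
  rewrite addr0 => h; apply: h; exact: nbhs_filter.
have [[W1 W2] /= [nW1 nW2] sW] := hc U UK.
have [F [finF FA sF]] := hA W2 nW2.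
have finT : finite_set [set i : idx A | F (val i)].
  exact: (finite_preimage (in2W val_inj) finF).
pose XF := fset_set [set i : idx A | F (val i)].
have XFP i : (i \in XF) = F (val i) :> Prop.
  by rewrite /XF in_fset_set // in_setE.
pose S1 (f : {ptws idx A -> G}) := \sum_(i <- XF) (f i - x0 i).
have cS1 : S1 @ nbhs x0 --> 0.
  apply: (@my_cvg_sum G _ _ _ _ XF (fun i f => f i - x0 i)) => i.
  have := @my_cvgD G _ (nbhs x0) _ (fun f : {ptws idx A -> G} => f i)
     (fun=> - x0 i) (x0 i) (- x0 i) (@proj_cvg G _ x0 i) (cvg_cst _).
  by rewrite subrr => h; apply: h; exact: nbhs_filter.
have nS1 := cS1 _ nW1.
rewrite /from_subspace nbhs_simpl.
suff : nbhs x0 [set f | SA A f -> U (Kalton A f)] by [].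
have nS1' : nbhs x0 (S1 @^-1` W1) := nS1.
apply: filterS nS1' => f /= W1f Sf.
pose d := f - x0.
have Sd : SA A d by exact: SAB.
have [X hX] := @SA_supp _ _ d Sd.
pose Y := (X `|` XF)%fset.
pose e i := if i \in XF then d i else 0.
have S1e : S1 f = \sum_(i <- Y) e i.
  rewrite /S1 (_ : \sum_(i <- XF) (f i - x0 i) = \sum_(i <- XF) e i); last first.
    by rewrite [RHS]big_seq [LHS]big_seq; apply: eq_bigr => i iX; rewrite /e iX /d fctE.
  rewrite -(fsbigTE XF e); last by move=> i /negbTE; rewrite /e => ->.
  rewrite (fsbigTE Y e) // => i; rewrite inE negb_or => /andP[_ /negbTE].
  by rewrite /e => ->.
have Kd : Kalton A d = \sum_(i <- Y) d i.
  by apply: KE => i; rewrite inE negb_or => /andP[/hX].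
have Kfx : Kalton A f = Kalton A x0 + (S1 f + (Kalton A d - S1 f)).
  by rewrite [S1 f + _]addrC subrK /d KB // addrC subrK.
rewrite Kfx; apply: (sW (S1 f, Kalton A d - S1 f)); split => //=.
apply: (sF (Kalton A d - S1 f)); rewrite Kd S1e -sumrB.
apply: (@subgroup_sum G _ _ Y); first exact: gen_subgroupP.
move=> i; rewrite /e; case: ifP => iXF.
  by rewrite subrr; case: (@gen_subgroupP G (A `\` F)).
rewrite subr0; apply: (@cyc_gen G _ (val i)).
  split; first exact: (set_mem (valP i)).
  by move=> Fi; move/negbT/negP: iXF; apply; rewrite XFP.
rewrite /d fctE; case: (@cyc_subgroup G (val i)) => _; apply.
  by case: Sf => + _; apply.
by case: Sx0 => + _; apply.
Qed.

End Main.

Theorem theorem3p5 (G : topologicalZmodType) (hG : hausdorff_space G)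
  (A : set G) (hA0 : ~ A 0) :
  abs_cauchy_summable A <-> {within SA A, continuous (Kalton A)}.
Proof.
split; [exact: acs_to_cont | exact: cont_to_acs].
Qed.
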